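(* Let $(A,+)$ be a subsemigroup of the additive semigroup $(\mathbb{R},+)$ such that $0\in A\ne\{0\}$. For every finite set $S=\{0=s_0<s_1<\dots<s_k\}\subseteq A$ there exists a finite tight set $T=\{0=t_0<t_1<\dots<t_\ell\}\subseteq A$ such that $S\subseteq T$, $t_1=s_1$ and $t_\ell=s_k$.
   Context: A finite set $T=\{0=t_0<t_1<\dots<t_\ell\}\subseteq\mathbb{R}$ of nonnegative reals is tight if $t_{i+j}\le t_i+t_j$ for all $i,j$ with $0\le i\le j\le i+j\le\ell$. *)

(* Defs.v *)
(* real numbers. Finite sets of reals {0 = t_0 < ... < t_l}
   are represented by their increasing enumeration as a list. *)
From Stdlib Require Import Reals List.
Import ListNotations.
Open Scope R_scope.

Definition strictly_increasing (l : list R) : Prop :=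
  forall i : nat, (S i < length l)%nat -> nth i l 0 < nth (S i) l 0.

Definition tight (t : list R) : Prop :=
  t <> [] /\ nth 0 t 0 = 0 /\ strictly_increasing t /\
  forall i j : nat, (i <= j)%nat -> (i + j < length t)%nat ->
    nth (i + j) t 0 <= nth i t 0 + nth j t 0.

(* Main.v *)
Require Import Defs.
From Stdlib Require Import Reals List Sorted Lra Lia.
Import ListNotations.
Open Scope R_scope.

Lemma ss_nth_lt (t : list R) : StronglySorted Rlt t ->
  forall i j, (i < j)%nat -> (j < length t)%nat -> nth i t 0 < nth j t 0.
Proof.
  induction t as [|h r IH]; intros Hs i j Hij Hj; simpl in Hj; [lia|].
  inversion Hs as [|? ? Hr Hf]; subst.
  destruct j as [|j]; [lia|]. destruct i as [|i].
  - simpl. rewrite Forall_forall in Hf. apply Hf. apply nth_In. lia.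
  - simpl. apply IH; auto; lia.
Qed.

Lemma ss_nth_le (t : list R) : StronglySorted Rlt t ->
  forall i j, (i <= j)%nat -> (j < length t)%nat -> nth i t 0 <= nth j t 0.
Proof.
  intros Hs i j Hij Hj. destruct (Nat.eq_dec i j). subst; lra.
  left. apply ss_nth_lt; auto; lia.
Qed.

Lemma ss_strict (t : list R) : StronglySorted Rlt t -> strictly_increasing t.
Proof. intros Hs i Hi. apply ss_nth_lt; auto. Qed.

Lemma last_In_ne (t : list R) : t <> [] -> In (last t 0) t.
Proof.
  induction t as [|h r IH]; intros H; [congruence|].
  destruct r as [|h' r']. simpl; auto.
  change (last (h :: h' :: r') 0) with (last (h' :: r') 0).
  right. apply IH. discriminate.
Qed.

Lemma ss_le_last (t : list R) : StronglySorted Rlt t -> forall x, In x t -> x <= last t 0.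
Proof.
  induction t as [|h r IH]; intros Hs x Hx; [destruct Hx|].
  inversion Hs as [|? ? Hr Hf]; subst.
  destruct r as [|h' r'].
  - destruct Hx as [<-|[]]; simpl; lra.
  - change (last (h :: h' :: r') 0) with (last (h' :: r') 0).
    destruct Hx as [<-|Hx].
    + rewrite Forall_forall in Hf. left. apply Hf. apply last_In_ne. discriminate.
    + apply IH; auto.
Qed.

Lemma insert_ss (t : list R) (x : R) : StronglySorted Rlt t ->
  exists t', StronglySorted Rlt t' /\ forall y, In y t' <-> (y = x \/ In y t).
Proof.
  induction t as [|h r IH]; intros Hs.
  - exists [x]. split. constructor; constructor. intro y; simpl; split; intro; intuition (subst; auto).
  - inversion Hs as [|? ? Hr Hf]; subst.
    destruct (Rtotal_order x h) as [Hlt|[Heq|Hgt]].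
    + exists (x :: h :: r). split.
      * constructor; auto. constructor; auto.
        rewrite Forall_forall in *. intros y Hy. specialize (Hf y Hy). lra.
      * intro y; simpl; split; intro; intuition (subst; auto).
    + subst. exists (h :: r). split; auto. intro y; simpl; split; intro; intuition (subst; auto).
    + destruct (IH Hr) as [r' [Hr' Hin]]. exists (h :: r'). split.
      * constructor; auto. rewrite Forall_forall in *. intros y Hy.
        apply Hin in Hy. destruct Hy as [->|Hy]; auto.
      * intro y. simpl. rewrite Hin. split; intro; intuition (subst; auto).
Qed.

Lemma sort_exists (l : list R) :
  exists t, StronglySorted Rlt t /\ forall y, In y t <-> In y l.
Proof.
  induction l as [|x l IH].
  - exists []. split. constructor. intro y; simpl; split; intro; intuition (subst; auto).
  - destruct IH as [t [Ht Hin]]. destruct (insert_ss t x Ht) as [t' [Ht' Hin']].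
    exists t'. split; auto. intro y. rewrite Hin'. simpl. rewrite Hin. split; intro; intuition (subst; auto).
Qed.

Lemma closed_tight (t : list R) : StronglySorted Rlt t -> t <> [] -> nth 0 t 0 = 0 ->
  (forall x y, In x t -> In y t -> x + y <= last t 0 -> In (x + y) t) ->
  forall i j : nat, (i + j < length t)%nat ->
    nth (i + j) t 0 <= nth i t 0 + nth j t 0.
Proof.
  intros Hs Hne H0 Hcl i j Hij.
  destruct (Rle_dec (nth i t 0 + nth j t 0) (last t 0)) as [Hle|Hgt].
  2:{ assert (nth (i+j) t 0 <= last t 0) by (apply ss_le_last; auto; apply nth_In; lia). lra. }
  assert (forall m, (m <= j)%nat -> nth (i+m) t 0 <= nth i t 0 + nth m t 0
            /\ In (nth i t 0 + nth m t 0) t) as Key.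
  { induction m as [|m IHm]; intros Hm.
    - rewrite H0, Nat.add_0_r, Rplus_0_r. split. lra. apply nth_In; lia.
    - destruct IHm as [IH1 IH2]; [lia|].
      assert (Hlt : nth m t 0 < nth (S m) t 0) by (apply ss_nth_lt; auto; lia).
      assert (Hmj : nth (S m) t 0 <= nth j t 0) by (apply ss_nth_le; auto; lia).
      assert (Hin : In (nth i t 0 + nth (S m) t 0) t).
      { apply Hcl; try (apply nth_In; lia). lra. }
      split; auto.
      destruct (In_nth _ _ 0 Hin) as [q [Hq Hqe]].
      destruct (Compare_dec.le_lt_dec q (i + m)) as [Hqle|Hqgt].
      + assert (nth q t 0 <= nth (i+m) t 0) by (apply ss_nth_le; auto; lia). lra.
      + assert (nth (i + S m) t 0 <= nth q t 0) by (apply ss_nth_le; auto; lia). lra. }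
  apply Key; lia.
Qed.

Inductive Pn (s' : list R) : nat -> R -> Prop :=
| Pn0 : Pn s' 0 0
| PnS : forall n x a, Pn s' n x -> In a s' -> Pn s' (S n) (x + a).

Fixpoint gen (s' : list R) (n : nat) : list R :=
  match n with
  | O => [0]
  | S n => gen s' n ++ flat_map (fun x => map (fun a => x + a) s') (gen s' n)
  end.

Lemma gen_spec s' n x : In x (gen s' n) <-> exists m, (m <= n)%nat /\ Pn s' m x.
Proof.
  revert x; induction n as [|n IH]; intro x; simpl.
  - split.
    + intros [<-|[]]. exists 0%nat. split; auto. constructor.
    + intros [m [Hm HP]]. assert (m = 0%nat) by lia. subst. inversion HP. auto.
  - rewrite in_app_iff, in_flat_map. split.
    + intros [H|[y [Hy Hx]]].
      * apply IH in H. destruct H as [m [Hm HP]]. exists m. split; auto.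
      * apply IH in Hy. destruct Hy as [m [Hm HP]].
        apply in_map_iff in Hx. destruct Hx as [a [<- Ha]].
        exists (S m). split. lia. constructor; auto.
    + intros [m [Hm HP]]. destruct (Nat.eq_dec m (S n)) as [->|Hne].
      * right. inversion HP; subst. exists x0. split. apply IH. exists n. split; auto.
        apply in_map_iff. exists a. auto.
      * left. apply IH. exists m. split; auto. lia.
Qed.

Lemma Pn_add s' m x k y : Pn s' m x -> Pn s' k y -> Pn s' (m + k) (x + y).
Proof.
  intros Hx Hy. induction Hy.
  - rewrite Nat.add_0_r, Rplus_0_r. auto.
  - rewrite Nat.add_succ_r. replace (x + (x0 + a)) with ((x + x0) + a) by ring.
    constructor; auto.
Qed.

Lemma Pn_lb s' d m x : (forall a, In a s' -> d <= a) -> Pn s' m x -> INR m * d <= x.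
Proof.
  intros Hd HP. induction HP.
  - simpl. lra.
  - rewrite S_INR. specialize (Hd a H). lra.
Qed.

Lemma Pn_A (A : R -> Prop) s' m x :
  (forall x y : R, A x -> A y -> A (x + y)) -> A 0 -> (forall a, In a s' -> A a) ->
  Pn s' m x -> A x.
Proof. intros Hadd H0 Hs HP. induction HP; auto. Qed.

Lemma si_lt (l : list R) : strictly_increasing l ->
  forall k i, (i + S k < length l)%nat -> nth i l 0 < nth (i + S k) l 0.
Proof.
  intros Hl k. induction k as [|k IH]; intros i Hi.
  - rewrite Nat.add_1_r. apply Hl. lia.
  - specialize (IH i ltac:(lia)). specialize (Hl (i + S k)%nat ltac:(lia)).
    replace (i + S (S k))%nat with (S (i + S k)) by lia. lra.
Qed.

Lemma si_ss (l : list R) : strictly_increasing l -> StronglySorted Rlt l.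
Proof.
  induction l as [|h r IH]; intros Hl. constructor.
  constructor.
  - apply IH. intros i Hi. apply (Hl (S i)). simpl; lia.
  - rewrite Forall_forall. intros y Hy. destruct (In_nth _ _ 0 Hy) as [p [Hp <-]].
    pose proof (si_lt _ Hl p 0%nat) as H. simpl in H. apply H. lia.
Qed.

Theorem lemma4p3 (A : R -> Prop)
  (HAadd : forall x y : R, A x -> A y -> A (x + y))
  (HA0 : A 0)
  (HAne : exists a : R, A a /\ a <> 0)
  (s : list R)
  (Hslen : (2 <= length s)%nat)
  (Hs0 : nth 0 s 0 = 0)
  (Hsinc : strictly_increasing s)
  (HsA : forall x : R, In x s -> A x) :
  exists t : list R,
    tight t /\
    (forall x : R, In x t -> A x) /\
    (forall x : R, In x s -> In x t) /\
    nth 1 t 0 = nth 1 s 0 /\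
    last t 0 = last s 0.
Proof.
  pose proof (si_ss _ Hsinc) as Hss.
  assert (Hd0 : 0 < nth 1 s 0) by (pose proof (ss_nth_lt s Hss 0 1 ltac:(lia) ltac:(lia)); lra).
  set (d := nth 1 s 0) in *.
  set (L := last s 0).
  assert (HLs : In L s) by (apply last_In_ne; intro E; subst; simpl in Hslen; lia).
  assert (HleL : forall x, In x s -> x <= L) by (apply ss_le_last; auto).
  destruct s as [|h s']; [simpl in Hslen; lia|].
  simpl in Hs0. subst h.
  destruct s' as [|d' s'']; [simpl in Hslen; lia|].
  simpl in d. subst d.
  set (s' := d' :: s'') in *.
  assert (Hds : forall a, In a s' -> d' <= a).
  { intros a Ha. inversion Hss as [|? ? Hss' _]; subst.
    inversion Hss' as [|? ? _ Hf]; subst. destruct Ha as [<-|Ha]. lra.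
    rewrite Forall_forall in Hf. left; auto. }
  assert (HsA' : forall a, In a s' -> A a) by (intros; apply HsA; right; auto).
  assert (HL0 : d' <= L) by (apply HleL; right; left; auto).
  assert (HLs' : In L s').
  { destruct HLs as [E|E]; auto. lra. }
  destruct (INR_unbounded (L / d')) as [K HK].
  assert (Hbound : forall m x, Pn s' m x -> x <= L -> (m <= K)%nat).
  { intros m x HP Hx. pose proof (Pn_lb _ _ _ _ Hds HP).
    assert (INR m <= L / d').
    { apply (Rmult_le_reg_r d'); auto. unfold Rdiv. rewrite Rmult_assoc, Rinv_l; lra. }
    assert (INR m < INR K) by lra. apply INR_lt in H1. lia. }
  set (memT := fun x => (exists m, Pn s' m x) /\ x <= L).
  set (l := filter (fun x => if Rle_dec x L then true else false) (gen s' K)).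
  assert (Hl : forall x, In x l <-> memT x).
  { intro x. unfold l, memT. rewrite filter_In, gen_spec. split.
    - intros [[m [_ HP]] Hx]. destruct (Rle_dec x L); [|discriminate]. split; eauto.
    - intros [[m HP] Hx]. split. exists m. split; eauto.
      destruct (Rle_dec x L); auto. }
  destruct (sort_exists l) as [t [Ht Htl]].
  assert (HT : forall x, In x t <-> memT x) by (intro; rewrite Htl; auto).
  assert (Hnn : forall x, memT x -> 0 <= x).
  { intros x [[m HP] _]. pose proof (Pn_lb _ _ _ _ Hds HP). pose proof (pos_INR m). nra. }
  assert (Hmem1 : forall a, In a s' -> memT a).
  { intros a Ha. split. exists 1%nat. rewrite <- (Rplus_0_l a). constructor; auto. constructor.
    apply HleL. right; auto. }
  assert (H0t : In 0 t) by (apply HT; split; [exists 0%nat; constructor|lra]).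
  assert (Hne : t <> []) by (intro E; rewrite E in H0t; destruct H0t).
  assert (Hnth0 : nth 0 t 0 = 0).
  { destruct (In_nth _ _ 0 H0t) as [q [Hq Hqe]].
    assert (nth 0 t 0 <= nth q t 0) by (apply ss_nth_le; auto; lia).
    assert (0 <= nth 0 t 0) by (apply Hnn, HT, nth_In; lia). lra. }
  assert (HLt : In L t) by (apply HT; auto).
  assert (Hlast : last t 0 = L).
  { assert (last t 0 <= L) by (apply HT, last_In_ne; auto).
    assert (L <= last t 0) by (apply ss_le_last; auto). lra. }
  exists t. split; [|split; [|split; [|split]]].
  - split; auto. split; auto. split. apply ss_strict; auto.
    intros i j _ Hij. apply closed_tight; auto.
    intros x y Hx Hy Hxy. apply HT in Hx, Hy. apply HT.
    destruct Hx as [[m1 H1] _]. destruct Hy as [[m2 H2] _].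
    split; [exists (m1 + m2)%nat; apply Pn_add; auto | lra].
  - intros x Hx. apply HT in Hx. destruct Hx as [[m HP] _]. eapply Pn_A; eauto.
  - intros x [<-|Hx]; auto. apply HT, Hmem1; auto.
  - simpl. assert (Hdt : In d' t) by (apply HT, Hmem1; left; auto).
    destruct (In_nth _ _ 0 Hdt) as [q [Hq Hqe]].
    assert (q <> 0%nat) by (intro; subst; lra).
    assert (nth 1 t 0 <= nth q t 0) by (apply ss_nth_le; auto; lia).
    assert (H1t : In (nth 1 t 0) t) by (apply nth_In; lia).
    assert (0 < nth 1 t 0) by (pose proof (ss_nth_lt t Ht 0 1 ltac:(lia) ltac:(lia)); lra).
    apply HT in H1t. destruct H1t as [[m HP] _].
    destruct m as [|m]. { inversion HP. lra. }
    pose proof (Pn_lb _ _ _ _ Hds HP) as Hlb. rewrite S_INR in Hlb.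
    pose proof (pos_INR m). nra.
  - rewrite Hlast. reflexivity.
Qed.
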